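(* Let $R$ be the ring of $2$-adic integers, $G=A_4$, $H=\langle a_1,a_2\rangle$ with $a_1=(1,2)(3,4)$, $a_2=(1,4)(2,3)$. Let $\delta_1,\delta_2,\delta_3$ be the linear characters of $H$ given by $\delta_1(a_1)=-1,\delta_1(a_2)=1$; $\delta_2(a_1)=1,\delta_2(a_2)=-1$; $\delta_3(a_1)=\delta_3(a_2)=-1$, viewed as rank-one $RH$-modules. Then each induced $R$-representation $\delta_i^G$ ($i=1,2,3$) of $G$ is irreducible and equivalent to the representation $\Gamma_2$ afforded by $M_2$. Moreover $\Gamma_2$ is equivalent to the monomial representation $a_1\mapsto\operatorname{diag}(-1,1,-1)$, $b\mapsto\left(\begin{smallmatrix}0&0&1\\1&0&0\\0&1&0\end{smallmatrix}\right)$ where $b=(1,2,3)$.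
   Context: Let $L$ be the free $R$-module with basis $e_1,\dots,e_4$ on which $G$ acts by permuting indices; $L_2=\{\sum\alpha_je_j:\alpha_j\in R,\ \sum\alpha_j\equiv0\pmod 2\}$, $L_0=R(e_1+e_2+e_3+e_4)$, $M_2=L_2/L_0$, an $RG$-module free of rank $3$ over $R$; $\Gamma_2$ is the $R$-representation it affords. Two $R$-representations are equivalent if their modules are isomorphic. *)

(* Defs.v *)
From HB Require Import structures.
From mathcomp Require Import all_boot all_order all_algebra all_fingroup all_solvable all_character.
Set Implicit Arguments. Unset Strict Implicit. Unset Printing Implicit Defensive.
Import GRing.Theory.
Local Open Scope ring_scope.

(* ---------- The ring of 2-adic integers, via its defining inverse-limit
   property: R is (isomorphic to) lim_n Z/2^(n+1). ---------- *)
Definition is_2adic_integers (R : comNzRingType) : Prop :=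
  exists pi : forall n : nat, R -> 'Z_(2 ^ n.+1),
    [/\ (forall n, pi n 1 = 1),
        (forall n x y, pi n (x + y) = pi n x + pi n y),
        (forall n x y, pi n (x * y) = pi n x * pi n y),
        (forall n x, ((pi n.+1 x : nat) %% 2 ^ n.+1)%N = (pi n x : nat)) &
        (forall s : forall n : nat, 'Z_(2 ^ n.+1),
            (forall n, ((s n.+1 : nat) %% 2 ^ n.+1)%N = (s n : nat)) ->
            exists! x : R, forall n, pi n x = s n)].

(* ---------- The group A_4 acting on {1,2,3,4} = 'I_4 (index k <-> k+1) ---------- *)
Definition o0 : 'I_4 := @Ordinal 4 0 isT.
Definition o1 : 'I_4 := @Ordinal 4 1 isT.
Definition o2 : 'I_4 := @Ordinal 4 2 isT.
Definition o3 : 'I_4 := @Ordinal 4 3 isT.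

Definition A4 : {group {perm 'I_4}} := ('Alt_('I_4))%G.
(* a1 = (1,2)(3,4), a2 = (1,4)(2,3), b = (1,2,3) (i.e. 1->2->3->1) *)
Definition a1 : {perm 'I_4} := (tperm o0 o1 * tperm o2 o3)%g.
Definition a2 : {perm 'I_4} := (tperm o0 o3 * tperm o1 o2)%g.
Definition b3 : {perm 'I_4} := (tperm o1 o2 * tperm o0 o1)%g.
Definition V4 : {group {perm 'I_4}} := (<<[set a1; a2]>>)%G.

(* ---------- Induced representation (row-vector / right-module convention,
   as in mathcomp's mx_representation: v |-> v *m rho g).
   For a right transversal t (G = disjoint union of H t_i), the module
   R_delta (x)_{RH} RG has R-basis 1 (x) t_i, and
   (1 (x) t_i) g = delta(t_i g t_j^-1) (1 (x) t_j)  when t_i g t_j^-1 \in H. *)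
Definition is_rtransversal (gT : finGroupType) (G H : {group gT}) (n : nat)
    (t : 'I_n -> gT) : Prop :=
  (forall i, t i \in G) /\
  (forall x, x \in G -> exists! i, x \in (H :* t i)%g).

Definition ind_mx (R : nzRingType) (gT : finGroupType) (H : {set gT}) (n : nat)
    (delta : gT -> R) (t : 'I_n -> gT) (g : gT) : 'M[R]_n :=
  \matrix_(i, j)
     (if (t i * g * (t j)^-1)%g \in H then delta (t i * g * (t j)^-1)%g else 0).

Definition lin_char_on (R : nzRingType) (gT : finGroupType) (H : {set gT})
    (delta : gT -> R) : Prop :=
  delta 1%g = 1 /\ {in H &, forall x y, delta (x * y)%g = delta x * delta y}.

Definition irreducible_over_frac (R : idomainType) (gT : finGroupType)
    (G : {group gT}) (n : nat) (rho : gT -> 'M[R]_n) : Prop :=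
  exists hr : mx_repr G (fun g => map_mx (@tofrac R) (rho g)),
    mx_irreducible (MxRepresentation hr).

Definition is_mx_repr (R : comUnitRingType) (gT : finGroupType)
   (G : {group gT}) (n : nat) (rho : gT -> 'M[R]_n) : Prop := mx_repr G rho.

(* L = R^4 (row vectors), G acting by permuting indices: e_j . g = e_{g j}. *)
Definition inL2 (R : nzRingType) (v : 'rV[R]_4) : Prop :=
  exists r : R, \sum_(j < 4) v 0 j = 2 * r.
Definition inL0 (R : nzRingType) (v : 'rV[R]_4) : Prop :=
  exists c : R, v = c *: const_mx 1.

(* (R^3, rho) is isomorphic, as an RG-module, to M_2 = L_2/L_0:
   there is an R-linear map L_2 -> R^3 that is onto, has kernel exactly L_0
   and is G-equivariant.  (This is a module isomorphism M_2 ~ (R^3,rho).) *)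
Definition equiv_to_Gamma2 (R : comNzRingType) (G : {group {perm 'I_4}})
    (rho : {perm 'I_4} -> 'M[R]_3) : Prop :=
  exists phi : 'rV[R]_4 -> 'rV[R]_3,
    [/\ (forall (a : R) u v, inL2 u -> inL2 v -> phi (a *: u + v) = a *: phi u + phi v),
        (forall w, exists2 u, inL2 u & phi u = w),
        (forall u, inL2 u -> (phi u = 0 <-> inL0 u)) &
        (forall g u, g \in G -> inL2 u -> phi (u *m perm_mx g) = phi u *m rho g)].

Definition diag_a1 (R : nzRingType) : 'M[R]_3 :=
  \matrix_(i, j) (if i == j then (if (i : nat) == 1%N then 1 else -1) else 0).
(* [[0,0,1],[1,0,0],[0,1,0]] *)
Definition cyc_b (R : nzRingType) : 'M[R]_3 :=
  \matrix_(i, j) (if (j : nat) == (((i : nat) + 2) %% 3)%N then 1 else 0).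

(* Main.v *)
Require Import Defs.
From HB Require Import structures.
From mathcomp Require Import all_boot all_order all_algebra all_fingroup all_solvable all_character.
From Stdlib Require Import ClassicalEpsilon.
Import GRing.Theory.
Set Implicit Arguments. Unset Strict Implicit. Unset Printing Implicit Defensive.
Local Open Scope ring_scope.

Section Finite.
Local Open Scope group_scope.

Definition a3 : {perm 'I_4} := a1 * a2.
Definition s0 : {perm 'I_4} := a3 * b3.

Definition code (p : {perm 'I_4}) : seq nat :=
  [:: val (p o0); val (p o1); val (p o2); val (p o3)].
Definition mulc (c d : seq nat) : seq nat := [seq nth 0%N d i | i <- c].

Lemma ord4E (x : 'I_4) : [\/ x = o0, x = o1, x = o2 | x = o3].
Proof.
case: x => -[|[|[|[|i]]]] Hi //.
- by constructor 1; apply/val_inj.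
- by constructor 2; apply/val_inj.
- by constructor 3; apply/val_inj.
- by constructor 4; apply/val_inj.
Qed.

Lemma eq_code (p q : {perm 'I_4}) : (p == q) = (code p == code q).
Proof.
apply/eqP/eqP => [->//|]; rewrite /code => -[E0 E1 E2 E3].
by apply/permP => x; apply/val_inj; case: (ord4E x) => ->.
Qed.

Lemma code_nth (q : {perm 'I_4}) (x : 'I_4) : val (q x) = nth 0%N (code q) (val x).
Proof. by case: (ord4E x) => ->. Qed.

Lemma codeM (p q : {perm 'I_4}) : code (p * q) = mulc (code p) (code q).
Proof. by rewrite /code /mulc /= !permM !code_nth. Qed.

Lemma code1 : code 1 = [:: 0; 1; 2; 3]%N.
Proof. by rewrite /code !perm1. Qed.

Lemma code_t (x y : 'I_4) : code (tperm x y) = [seq val ([fun z => z with x |-> y, y |-> x] i) | i <- [:: o0; o1; o2; o3]].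
Proof. by rewrite /code /tperm !permE. Qed.

Lemma code_a1 : code a1 = [:: 1; 0; 3; 2]%N.
Proof. by rewrite /a1 codeM !code_t; vm_compute. Qed.
Lemma code_a2 : code a2 = [:: 3; 2; 1; 0]%N.
Proof. by rewrite /a2 codeM !code_t; vm_compute. Qed.
Lemma code_b3 : code b3 = [:: 1; 2; 0; 3]%N.
Proof. by rewrite /b3 codeM !code_t; vm_compute. Qed.
Lemma code_a3 : code a3 = [:: 2; 3; 0; 1]%N.
Proof. by rewrite /a3 codeM code_a1 code_a2; vm_compute. Qed.
Lemma code_s0 : code s0 = [:: 0; 3; 1; 2]%N.
Proof. by rewrite /s0 codeM code_a3 code_b3; vm_compute. Qed.

Ltac cbase := rewrite ?code1 ?code_a1 ?code_a2 ?code_b3 ?code_a3 ?code_s0.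
Ltac pdec := rewrite ?eq_code; cbase; repeat (rewrite codeM; cbase); vm_compute.

Lemma peq (p q : {perm 'I_4}) : code p = code q -> p = q.
Proof. by move=> E; apply/eqP; rewrite eq_code E. Qed.


Lemma S4_group : group_set [set 1; a1; a2; a3].
Proof.
apply/group_setP; split; first by rewrite !inE eqxx.
move=> x y; rewrite !inE -!orbA => /or4P[] /eqP-> /or4P[] /eqP->; by pdec.
Qed.

Lemma V4E : V4 = [set 1; a1; a2; a3] :> {set _}.
Proof.
apply/eqP; rewrite eqEsubset; apply/andP; split.
  have := @genS _ [set a1; a2] [set 1; a1; a2; a3].
  rewrite (gen_set_id S4_group); apply.
  apply/subsetP => x; rewrite !inE => /orP[] /eqP->; by rewrite eqxx ?orbT.
apply/subsetP => x; rewrite !inE -!orbA => /or4P[] /eqP->.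
- exact: group1.
- by apply: mem_gen; rewrite !inE eqxx.
- by apply: mem_gen; rewrite !inE eqxx orbT.
- by rewrite /a3 groupM // mem_gen // !inE eqxx ?orbT.
Qed.

Lemma inV4 x : (x \in V4) = [|| x == 1, x == a1, x == a2 | x == a3].
Proof. by rewrite V4E !inE -!orbA. Qed.

Lemma V4_A4 h : h \in V4 -> h \in A4.
Proof.
rewrite inV4 => /or4P[] /eqP->; rewrite /A4 /= ?group1 // ?Alt_even.
- by rewrite /a1 odd_permM !odd_tperm.
- by rewrite /a2 odd_permM !odd_tperm.
- by rewrite /a3 /a1 /a2 !odd_permM !odd_tperm.
Qed.

Lemma b3_A4 : b3 \in A4.
Proof. by rewrite /A4 /= Alt_even /b3 odd_permM !odd_tperm. Qed.

Lemma s0_A4 : s0 \in A4.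
Proof. by rewrite /s0 groupM ?b3_A4 // V4_A4 // inV4 eqxx !orbT. Qed.

Lemma s0V : s0^-1 = s0 * s0.
Proof. by apply/eqP; rewrite eq_invg_mul; pdec. Qed.

Lemma V4V h : h \in V4 -> h^-1 = h.
Proof. by rewrite inV4 => /or4P[] /eqP-> ; apply/eqP; rewrite eq_invg_mul; pdec. Qed.

Lemma V4_comm h k : h \in V4 -> k \in V4 -> h * k = k * h.
Proof. by rewrite !inV4 => /or4P[] /eqP-> /or4P[] /eqP->; apply/eqP; pdec. Qed.

Lemma V4_conj h k : h \in V4 -> k \in V4 -> h ^ k = h.
Proof.
move=> hV kV; rewrite conjgE (V4V kV) (V4_comm hV kV) mulgA.
by rewrite -{1}(V4V kV) mulVg mul1g.
Qed.

Lemma V4_s0 h : h \in V4 -> h ^ s0 \in V4.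
Proof. by rewrite inV4 conjgE s0V => /or4P[] /eqP->; rewrite inV4; pdec. Qed.

Lemma stab0 p : p \in A4 -> p o0 = o0 -> [\/ p = 1, p = s0 | p = s0 * s0].
Proof.
move=> pA p0.
have U : uniq (code p).
  rewrite (_ : code p = map (fun i => val (p i)) [:: o0; o1; o2; o3]) //.
  by rewrite map_inj_uniq //; apply: inj_comp; [exact: val_inj | exact: perm_inj].
have : code p \in [:: [:: 0; 1; 2; 3]; [:: 0; 3; 1; 2]; [:: 0; 2; 3; 1];
                    [:: 0; 2; 1; 3]; [:: 0; 3; 2; 1]; [:: 0; 1; 3; 2]]%N.
  move: U; rewrite /code p0.
  case: (p o1) => [[|[|[|[|?]]]] ?] //; case: (p o2) => [[|[|[|[|?]]]] ?] //;
    case: (p o3) => [[|[|[|[|?]]]] ?] //.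
have oddE q : code p = code q -> ~~ odd_perm q -> p = q.
  by move=> E _; apply: peq.
move: pA; rewrite /A4 /= Alt_even.
rewrite !inE => + /or4P[|||/or3P[||]] /eqP E.
- by move=> _; constructor 1; apply: peq; rewrite E code1.
- by move=> _; constructor 2; apply: peq; rewrite E code_s0.
- by move=> _; constructor 3; apply: peq; rewrite E codeM code_s0.
- rewrite (peq (p := p) (q := tperm o1 o2)) ?odd_tperm; first by [].
  by rewrite E code_t; vm_compute.
- rewrite (peq (p := p) (q := tperm o1 o3)) ?odd_tperm; first by [].
  by rewrite E code_t; vm_compute.
- rewrite (peq (p := p) (q := tperm o2 o3)) ?odd_tperm; first by [].
  by rewrite E code_t; vm_compute.
Qed.

Definition xk (k : 'I_4) : {perm 'I_4} :=
  match val k with 0%N => 1 | 1%N => a1 | 2%N => a3 | _ => a2 end.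

Lemma xk_V4 k : xk k \in V4.
Proof. by rewrite inV4 /xk; case: (ord4E k) => ->; rewrite eqxx ?orbT. Qed.

Lemma xk_o0 : xk o0 = 1. Proof. by []. Qed.
Lemma xk_o1 : xk o1 = a1. Proof. by []. Qed.
Lemma xk_o2 : xk o2 = a3. Proof. by []. Qed.
Lemma xk_o3 : xk o3 = a2. Proof. by []. Qed.

Lemma xk0 k : xk k o0 = k.
Proof.
case: (ord4E k) => ->; rewrite ?xk_o0 ?xk_o1 ?xk_o2 ?xk_o3; apply/val_inj;
  by rewrite code_nth ?code1 ?code_a1 ?code_a2 ?code_a3.
Qed.

Lemma xkk k : xk k k = o0.
Proof.
case: (ord4E k) => ->; rewrite ?xk_o0 ?xk_o1 ?xk_o2 ?xk_o3; apply/val_inj;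
  by rewrite code_nth ?code1 ?code_a1 ?code_a2 ?code_a3.
Qed.

Lemma A4dec x : x \in A4 ->
  exists2 h, h \in V4 & [\/ x = h, x = s0 * h | x = s0 * s0 * h].
Proof.
move=> xA; set h := xk (x o0).
have hV : h \in V4 := xk_V4 _.
have yA : x * h \in A4 by rewrite groupM // V4_A4.
have y0 : (x * h) o0 = o0 by rewrite permM xkk.
have xE : x = (x * h) * h by rewrite -mulgA -{2}(V4V hV) mulgV mulg1.
exists h => //; case: (stab0 yA y0) => E; rewrite xE E.
- by constructor 1; rewrite mul1g.
- by constructor 2.
- by constructor 3.
Qed.

Lemma nV4 x h : x \in A4 -> h \in V4 -> h ^ x \in V4.
Proof.
move=> /A4dec[h0 h0V [->|->|->]] hV.
- by rewrite V4_conj.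
- by rewrite conjgM V4_conj // V4_s0.
- have H2 := V4_s0 (V4_s0 hV).
  by rewrite (conjgM _ (s0 * s0)) (conjgM h s0 s0) V4_conj.
Qed.

Lemma V4_noncent x p : x \in A4 -> x \notin V4 -> p \in V4 -> p != 1 -> p ^ x != p.
Proof.
move=> /A4dec[h0 h0V [->|->|->]]; first by rewrite h0V.
- move=> _ pV; have H2 := V4_s0 pV.
  rewrite conjgM V4_conj //; move: pV.
  by rewrite inV4 conjgE s0V => /or4P[] /eqP->; pdec.
- move=> _ pV; have H2 := V4_s0 (V4_s0 pV).
  rewrite (conjgM _ (s0 * s0)) (conjgM p s0 s0) V4_conj //; move: pV.
  by rewrite inV4 !conjgE s0V => /or4P[] /eqP->; pdec.
Qed.

End Finite.

Section Ind.
Variables (R : comUnitRingType) (gT : finGroupType) (G H : {group gT}) (n : nat)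
  (delta : gT -> R) (t : 'I_n -> gT).
Hypothesis dl : lin_char_on H delta.
Hypothesis tT : is_rtransversal G H t.

Lemma ind_uniq x i : x \in G ->
  exists j, (t i * x * (t j)^-1 \in H /\ forall j', t i * x * (t j')^-1 \in H -> j' = j)%g.
Proof.
move=> xG; have tiG := tT.1 i.
case: (tT.2 _ (groupM tiG xG)) => j [Hj U].
exists j; rewrite -mem_rcoset; split => // j' Hj'.
by apply/esym/U; rewrite mem_rcoset.
Qed.

Lemma ind_repr : mx_repr G (ind_mx H delta t).
Proof.
split.
  apply/matrixP => i j; rewrite !mxE mulg1.
  case: (ind_uniq i (group1 G)) => j0 [_ U].
  have ii : (t i * 1 * (t i)^-1 \in H)%g by rewrite mulg1 mulgV group1.
  have ei := U _ ii.
  case: (eqVneq i j) => [<-|nij]; first by rewrite mulgV group1 dl.1.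
  rewrite ?(negbTE nij); case: ifP => // Hj.
  by move: nij; rewrite ei (U j) ?mulg1 // eqxx.
move=> x y xG yG; apply/matrixP => i k; rewrite !mxE.
case: (ind_uniq i xG) => j0 [Hj0 U].
rewrite (bigD1 j0) //= big1 ?addr0 => [|j nj]; last first.
  by rewrite mxE; case: ifP => [/U ej|]; [rewrite ej eqxx in nj | rewrite mul0r].
rewrite !mxE Hj0.
have E : (t i * x * (t j0)^-1 * (t j0 * y * (t k)^-1) = t i * (x * y) * (t k)^-1)%g.
  by rewrite !mulgA mulgKV.
case Hk: (t j0 * y * (t k)^-1 \in H)%g.
  by rewrite -E groupM // (dl.2 _ _ Hj0 Hk).
rewrite mulr0; case: ifP => // Hxy.
have : (t j0 * y * (t k)^-1 = (t i * x * (t j0)^-1)^-1 * (t i * (x * y) * (t k)^-1))%g.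
  by rewrite -E mulKg.
by move=> E2; move: Hk; rewrite E2 groupM ?groupV.
Qed.

Hypothesis sHG : H \subset G.
Hypothesis nH : forall x h, x \in G -> h \in H -> (h ^ x)%g \in H.

Lemma ind_diag h i j : h \in H ->
  ind_mx H delta t h i j = if i == j then delta (h ^ (t i)^-1)%g else 0.
Proof.
move=> hH; rewrite mxE.
have ci : (t i * h * (t i)^-1 = h ^ (t i)^-1)%g by rewrite conjgE invgK ?mulgA.
have ciH : (h ^ (t i)^-1)%g \in H by apply: nH; rewrite ?groupV ?tT.1.
case: (eqVneq i j) => [<-|nij]; first by rewrite ci ciH.
case: ifP => // Hj.
have hG : h \in G := subsetP sHG h hH.
case: (ind_uniq i hG) => j0 [_ U].
by move: nij; rewrite (U _ Hj) (U i) ?ci // eqxx.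
Qed.

End Ind.

Lemma ind_map (R S : comUnitRingType) (f : {rmorphism R -> S}) (gT : finGroupType)
   (H : {set gT}) n (delta : gT -> R) (t : 'I_n -> gT) g :
  map_mx f (ind_mx H delta t g) = ind_mx H (fun x => f (delta x)) t g.
Proof.
by apply/matrixP => i j; rewrite !mxE; case: ifP => _ //; rewrite rmorph0.
Qed.

Section Gamma.
Variable R : idomainType.
Hypothesis two : (2 : R) != 0.

Definition half (x : R) : R := epsilon (inhabits 0) (fun r => x = 2 * r).

Lemma halfE x r : x = 2 * r -> half x = r.
Proof.
move=> E; have := epsilon_spec (inhabits 0) (fun r => x = 2 * r) (ex_intro _ r E).
by rewrite -/(half x) E => /(mulfI two).
Qed.

Lemma m1neq1 : (-1 : R) != 1.
Proof.
apply: contra two => /eqP E.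
by rewrite -[2]/(1 + 1 : R) -{1}E addNr.
Qed.

Lemma four2 : (4 : R) = 2 * 2.
Proof. by rewrite -natrM. Qed.

Lemma four_neq0 : (4 : R) != 0.
Proof. by rewrite four2 mulf_neq0. Qed.

Lemma AB_BA n (A B : 'M[R]_n) c : c != 0 -> A *m B = c%:M -> B *m A = c%:M.
Proof.
move=> c0 AB.
have dA : \det A != 0.
  apply: contra c0 => /eqP dA0.
  have := congr1 determinant AB; rewrite det_mulmx dA0 mul0r det_scalar.
  by move/esym/eqP; rewrite expf_eq0 => /andP[].
have : A *m (B *m A - c%:M) = 0.
  by rewrite mulmxBr mulmxA AB mul_scalar_mx mul_mx_scalar subrr.
move/(congr1 (mulmx (\adj A))); rewrite mulmxA mul_adj_mx mulmx0 mul_scalar_mx.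
by move/eqP; rewrite scalemx_eq0 (negbTE dA) /= subr_eq0 => /eqP.
Qed.


Lemma gamma (G : {group {perm 'I_4}}) (rho : {perm 'I_4} -> 'M[R]_3) (S : 'M[R]_(4,3)) :
  (forall k j, S k j = 1 \/ S k j = -1) ->
  (forall j, \sum_k S k j = 0) ->
  (forall j j', \sum_k S k j * S k j' = (j == j')%:R * 4) ->
  (forall g, g \in G -> perm_mx g *m S = S *m rho g) ->
  equiv_to_Gamma2 G rho.
Proof.
move=> Spm Scol Sorth Seq.
pose d k j : R := if S k j == 1 then 0 else 1.
have Sd k j : S k j = 1 - 2 * d k j.
  rewrite /d; case: (Spm k j) => ->; first by rewrite eqxx mulr0 subr0.
  by rewrite (negbTE m1neq1) mulr1 opprD addrA subrr sub0r.
have D2 k j : 2 * (1 - d k j) = 1 + S k j.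
  by rewrite Sd mulrBr mulr1 addrA.
pose hf (u : 'rV[R]_4) j := half ((u *m S) 0 j).
pose phi (u : 'rV[R]_4) : 'rV[R]_3 := \row_j hf u j.
have HU' u : inL2 u -> forall j, (u *m S) 0 j = 2 * hf u j.
  case=> r Hr j.
  suff [y Hy] : exists y, (u *m S) 0 j = 2 * y by rewrite /hf (halfE Hy).
  exists (r - \sum_k u 0 k * d k j); rewrite mxE.
  under eq_bigr do rewrite Sd mulrBr mulr1 mulrCA.
  by rewrite sumrB Hr -mulr_sumr mulrBr.
have HU u : inL2 u -> u *m S = 2 *: phi u.
  move=> uL; apply/matrixP => i j; rewrite (ord1 i) [RHS]mxE [phi u 0 j]mxE.
  exact: HU'.
exists phi; split.
- move=> a u v uL vL; apply/matrixP => i j; rewrite !mxE {1}/hf.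
  apply: halfE; rewrite mulmxDl -scalemxAl.
  rewrite (_ : (a *: (u *m S) + v *m S) 0 j = a * (u *m S) 0 j + (v *m S) 0 j);
    last by rewrite !mxE.
  by rewrite (HU' u uL) (HU' v vL) mulrDr mulrCA.
- move=> w.
  pose D k j := 1 - d k j.
  have colD j : \sum_k D k j = 2.
    apply: (mulfI two); rewrite mulr_sumr.
    under eq_bigr do rewrite D2.
    by rewrite big_split /= Scol addr0 sumr_const card_ord -four2.
  have DS j j' : \sum_k D k j * S k j' = (j == j')%:R * 2.
    apply: (mulfI two); rewrite mulr_sumr.
    under eq_bigr do rewrite mulrA D2 mulrDl mul1r.
    by rewrite big_split /= Scol add0r Sorth four2 mulrCA.
  pose u : 'rV[R]_4 := \row_k \sum_j w 0 j * D k j.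
  have uL : inL2 u.
    exists (\sum_j w 0 j); rewrite mulr_sumr.
    under eq_bigr do rewrite mxE.
    rewrite exchange_big /=; apply: eq_bigr => j _.
    by rewrite -mulr_sumr colD mulrC.
  exists u => //; apply/matrixP => i j'; rewrite !mxE (ord1 i); apply: halfE.
  rewrite mxE.
  under eq_bigr do rewrite mxE mulr_suml.
  rewrite exchange_big /= (bigD1 j') //= [X in _ + X]big1 => [|j nj].
    under eq_bigr do rewrite -mulrA.
    by rewrite -mulr_sumr DS eqxx mul1r mulrC addr0.
  under eq_bigr do rewrite -mulrA.
  by rewrite -mulr_sumr DS (negbTE nj) mul0r mulr0.
- move=> u uL; have HuS := HU u uL.
  have E0 : phi u = 0 <-> u *m S = 0.
    rewrite HuS; split => [->|/eqP]; first by rewrite scaler0.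
    by rewrite scalemx_eq0 (negbTE two) => /eqP.
  rewrite E0; split => [uS0|[c ->]]; last first.
    rewrite -scalemxAl; apply/matrixP => i j; rewrite !mxE.
    under eq_bigr do rewrite !mxE mul1r.
    by rewrite Scol mulr0.
  pose N : 'M[R]_(4, 1 + 3) := row_mx (const_mx 1) S.
  have NtN : N^T *m N = 4%:M.
    rewrite tr_row_mx mul_col_row (scalar_mx_block 1 3).
    congr block_mx; apply/matrixP => i j; rewrite !mxE.
    + rewrite (ord1 i) (ord1 j) /=.
      under eq_bigr do rewrite !mxE mul1r.
      by rewrite sumr_const card_ord.
    + under eq_bigr do rewrite !mxE mul1r.
      by rewrite Scol.
    + under eq_bigr do rewrite !mxE mulr1.
      by rewrite Scol.
    + under eq_bigr do rewrite !mxE.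
      by rewrite Sorth mulrC mulr_natr.
  have NNt := AB_BA (four_neq0) NtN.
  have uN : u *m N = row_mx (u *m (const_mx 1 : 'M[R]_(4,1))) 0 by rewrite mul_mx_row uS0.
  have : u *m (N *m N^T) = (u *m (const_mx 1 : 'M[R]_(4,1))) *m (const_mx 1 : 'M[R]_(4,1))^T.
    by rewrite mulmxA uN tr_row_mx mul_row_col mul0mx addr0.
  rewrite NNt mul_mx_scalar => Hu.
  have Hk k : 4 * u 0 k = (u *m (const_mx 1 : 'M[R]_(4,1))) 0 0.
    have := congr1 (fun M : 'M[R]_(1,4) => M 0 k) Hu; rewrite [LHS]mxE => ->.
    by rewrite mxE big_ord1 !mxE mulr1.
  exists (u 0 ord0); apply/matrixP => i k; rewrite (ord1 i) !mxE mulr1.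
  by apply: (mulfI four_neq0); rewrite (Hk k) (Hk ord0).
- move=> g u gG uL; apply/matrixP => i j; rewrite (ord1 i) [LHS]mxE /hf.
  apply: halfE.
  rewrite -mulmxA (Seq g gG) mulmxA (HU u uL) -scalemxAl.
  by rewrite !mxE.
Qed.

End Gamma.

Ltac cbase := rewrite ?code1 ?code_a1 ?code_a2 ?code_b3 ?code_a3 ?code_s0.
Ltac pdec := rewrite ?eq_code; cbase; repeat (rewrite codeM; cbase); vm_compute.

Lemma n1 : (a1 == 1)%g = false. Proof. by pdec. Qed.
Lemma n2 : (a2 == 1)%g = false. Proof. by pdec. Qed.
Lemma n3 : (a3 == 1)%g = false. Proof. by pdec. Qed.
Lemma n12 : (a1 == a2) = false. Proof. by pdec. Qed.
Lemma n13 : (a1 == a3) = false. Proof. by pdec. Qed.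
Lemma n21 : (a2 == a1) = false. Proof. by pdec. Qed.
Lemma n23 : (a2 == a3) = false. Proof. by pdec. Qed.
Lemma n31 : (a3 == a1) = false. Proof. by pdec. Qed.
Lemma n32 : (a3 == a2) = false. Proof. by pdec. Qed.
Definition neqE := (n1, n2, n3, n12, n13, n21, n23, n31, n32).

Definition sgp (p h : {perm 'I_4}) : int := if (h == 1)%g || (h == p) then 1 else -1.

Lemma sum4 (V : nmodType) (F : 'I_4 -> V) : \sum_(k < 4) F k = F o0 + F o1 + F o2 + F o3.
Proof.
rewrite !big_ord_recl big_ord0 addr0 !addrA.
by congr (_ + _ + _ + _); congr F; apply: val_inj.
Qed.

Lemma core (q r : {perm 'I_4}) : q \in [:: a1; a2; a3] -> r \in [:: a1; a2; a3] ->
  \sum_(k < 4) sgp q (xk k) * sgp r (xk k) = (if q == r then 4 else 0) /\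
  \sum_(k < 4) sgp q (xk k) = 0.
Proof.
rewrite !sum4 xk_o0 xk_o1 xk_o2 xk_o3.
rewrite !inE => /or3P[] /eqP-> /or3P[] /eqP->; rewrite /sgp;
  by split; pdec.
Qed.
Lemma intr_sum (R : nzRingType) n (F : 'I_n -> int) :
  \sum_(i < n) (F i)%:~R = (\sum_(i < n) F i)%:~R :> R.
Proof. by rewrite rmorph_sum. Qed.

Lemma sgp_pm p h : sgp p h = 1 \/ sgp p h = -1.
Proof. by rewrite /sgp; case: ifP; [left|right]. Qed.

Lemma dform (R : idomainType) (delta : {perm 'I_4} -> R) :
  lin_char_on V4 delta ->
  [\/ delta a1 = -1 /\ delta a2 = 1, delta a1 = 1 /\ delta a2 = -1 |
      delta a1 = -1 /\ delta a2 = -1] ->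
  exists2 p, p \in [:: a1; a2; a3] & {in V4, forall h, delta h = (sgp p h)%:~R}.
Proof.
move=> dl dc.
have d3 : delta a3 = delta a1 * delta a2 by apply: dl.2; rewrite inV4 eqxx ?orbT.
case: dc => [[d1 d2]|[d1 d2]|[d1 d2]]; [exists a2 | exists a1 | exists a3];
  rewrite ?inE ?eqxx ?orbT // => h; rewrite inV4 => /or4P[] /eqP->;
  rewrite /sgp ?eqxx ?neqE /= ?dl.1 ?d3 ?d1 ?d2 ?mulN1r ?mulr1 ?opprK ?mul1r ?intrN //.
Qed.

Lemma sV4A4 : (V4 : {set {perm 'I_4}}) \subset (A4 : {set {perm 'I_4}}).
Proof. by apply/subsetP => h hV; apply: V4_A4. Qed.

Lemma s0nV : s0 \notin V4.
Proof. by rewrite inV4; pdec. Qed.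
Lemma s0s0nV : (s0 * s0)%g \notin V4.
Proof. by rewrite inV4; pdec. Qed.
Lemma s0s0_A4 : (s0 * s0)%g \in A4.
Proof. by rewrite groupM // s0_A4. Qed.

Lemma conj_back x y : y \in A4 -> (y * x * y^-1)%g \in V4 -> x \in V4.
Proof.
move=> yA H; have -> : x = ((y * x * y^-1) ^ y)%g by rewrite conjgE !mulgA mulVg mul1g mulgKV.
exact: nV4.
Qed.

Lemma pigeon3 (j j1 j2 : 'I_3) : j1 != ord0 -> j2 != ord0 -> j1 != j2 -> j != ord0 ->
  (j == j1) || (j == j2).
Proof.
by case: j j1 j2 => [[|[|[|?]]] ?] [[|[|[|?]]] ?] [[|[|[|?]]] ?].
Qed.

Lemma grp_id (gT : finGroupType) (x y z : gT) :
  ((y * x * z^-1)^-1 * (y * (x * x) * z^-1) = z * x * z^-1)%g.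
Proof. by rewrite !invMg invgK !mulgA mulgKV mulgKV. Qed.

Section Spec.
Variables (R : idomainType) (delta : {perm 'I_4} -> R) (t : 'I_3 -> {perm 'I_4})
  (p : {perm 'I_4}).
Hypothesis two : (2 : R) != 0.
Hypothesis dl : lin_char_on V4 delta.
Hypothesis tT : is_rtransversal A4 V4 t.
Hypothesis pL : p \in [:: a1; a2; a3].
Hypothesis dp : {in V4, forall h, delta h = (sgp p h)%:~R}.

Local Notation rho := (ind_mx V4 delta t).

Lemma rA : mx_repr A4 rho.
Proof. exact: ind_repr dl tT. Qed.

Lemma rho_diag h i j : h \in V4 -> rho h i j = if i == j then delta (h ^ (t i)^-1)%g else 0.
Proof. exact: (ind_diag delta tT sV4A4 nV4). Qed.

Lemma pV : p \in V4.
Proof. by move: pL; rewrite !inE inV4 => /or3P[] ->; rewrite ?orbT. Qed.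
Lemma pn1 : p != 1%g.
Proof. by move: pL; rewrite !inE => /or3P[] /eqP->; rewrite neqE. Qed.

Definition pj j := (p ^ t j)%g.

Lemma pjL j : pj j \in [:: a1; a2; a3].
Proof.
have : pj j \in V4 by apply: nV4; [exact: tT.1 | exact: pV].
have : pj j != 1%g by rewrite /pj conjg_eq1 pn1.
by rewrite inV4 !inE => /negbTE ->.
Qed.

Lemma eps j h : h \in V4 -> delta (h ^ (t j)^-1)%g = (sgp (pj j) h)%:~R.
Proof.
move=> hV; rewrite dp; last by apply: nV4; rewrite ?groupV ?tT.1.
rewrite /sgp conjg_eq1; congr (if _ then _ else _)%:~R; congr (_ || _).
by rewrite /pj; apply/eqP/eqP => [<-|->]; [rewrite conjgKV | rewrite conjgK].
Qed.

Lemma pj_inj j k : pj j = pj k -> j = k.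
Proof.
move=> E; case: (eqVneq j k) => // njk; exfalso.
have eA : (t j * (t k)^-1)%g \in A4 by rewrite groupM ?groupV ?tT.1.
have eV : (t j * (t k)^-1)%g \notin V4.
  apply/negP => eV; case: (tT.2 _ (tT.1 j)) => i [_ U].
  have Ej := U j; have Ek := U k.
  rewrite !mem_rcoset mulgV group1 in Ej Ek.
  by move: njk; rewrite -(Ej isT) -(Ek eV) eqxx.
have := V4_noncent eA eV pV pn1.
by rewrite conjgM -/(pj j) E /pj conjgK eqxx.
Qed.

Lemma pj_neq j k : j != k -> (pj j == pj k) = false.
Proof. by move=> njk; apply/negbTE; apply: contra njk => /eqP/pj_inj ->. Qed.

Lemma dpm h : h \in V4 -> delta h = 1 \/ delta h = -1.
Proof. by move=> hV; rewrite dp //; case: (sgp_pm p h) => ->; [left|right; rewrite intrN]. Qed.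

Definition v : 'rV[R]_3 := row 0 (rho 1%g) + row 0 (rho s0) + row 0 (rho (s0 * s0)%g).

Lemma v_pm j : v 0 j = 1 \/ v 0 j = -1.
Proof.
rewrite /v rA.1 !mxE.
case: (ind_uniq tT 0 s0_A4) => j1 [H1 U1].
case: (ind_uniq tT 0 s0s0_A4) => j2 [H2 U2].
have j10 : j1 != 0.
  apply/eqP => E; rewrite E in H1; move/negP: s0nV; apply.
  exact: (conj_back (tT.1 0) H1).
have j20 : j2 != 0.
  apply/eqP => E; rewrite E in H2; move/negP: s0s0nV; apply.
  exact: (conj_back (tT.1 0) H2).
have j12 : j1 != j2.
  apply/eqP => E; rewrite -E in H2; move/negP: s0nV; apply.
  apply: (conj_back (tT.1 j1)).
  rewrite -(grp_id s0 (t 0) (t j1)).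
  by rewrite groupM ?groupV.
case: (eqVneq j 0) => [->|j0].
  idtac.
  case: ifP => [/U1 E|_]; first by rewrite E eqxx in j10.
  case: ifP => [/U2 E|_]; first by rewrite E eqxx in j20.
  by left; rewrite !addr0.
rewrite mulr0n add0r.
case/orP: (pigeon3 j10 j20 j12 j0) => /eqP ->.
  rewrite H1; case: ifP => [/U2 E|_]; first by rewrite E eqxx in j12.
  by rewrite addr0; apply: dpm.
case: ifP => [/U1 E|_]; first by rewrite E eqxx in j12.
by rewrite add0r H2; apply: dpm.
Qed.

Lemma vfix (y : {perm 'I_4}) : [|| y == 1%g, y == s0 | y == (s0 * s0)%g] -> v *m rho y = v.
Proof.
have rM := rA.2.
have yA (z : {perm 'I_4}) : [|| z == 1%g, z == s0 | z == (s0 * s0)%g] -> z \in A4.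
  by case/or3P => /eqP->; rewrite ?group1 ?s0_A4 ?s0s0_A4.
have vs : v *m rho s0 = v.
  rewrite /v !mulmxDl -!row_mul -!rM ?group1 ?s0_A4 ?s0s0_A4 // mul1g.
  rewrite (_ : (s0 * s0 * s0 = 1)%g); last first.
    by apply/eqP; rewrite eq_code; cbase; repeat (rewrite codeM; cbase); vm_compute.
  by rewrite addrC addrA.
case/or3P => /eqP->; first by rewrite rA.1 mulmx1.
  exact: vs.
by rewrite rM ?s0_A4 // mulmxA !vs.
Qed.

Definition Smx : 'M[R]_(4, 3) := \matrix_(k, j) (v *m rho (xk k)) 0 j.

Lemma Seq g : g \in A4 -> perm_mx g *m Smx = Smx *m rho g.
Proof.
move=> gA; apply/row_matrixP => k.
have rowS k' : row k' Smx = v *m rho (xk k').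
  by apply/matrixP => i j; rewrite (ord1 i) !mxE.
rewrite !row_mul rowS.
have -> : row k (perm_mx g : 'M[R]_4) = delta_mx 0 (g k).
  by apply/matrixP => i j; rewrite (ord1 i) !mxE eqxx eq_sym.
have xA (k' : 'I_4) : xk k' \in A4 := V4_A4 (xk_V4 k').
rewrite -rowE rowS -mulmxA -(rA.2 _ _ (xA k) gA).
set y := (xk k * g * (xk (g k))^-1)%g.
have yA : y \in A4 by rewrite /y !groupM ?groupV ?xA.
have y0 : y o0 = o0 by rewrite /y !permM xk0; apply: (canLR (permK _)); rewrite xk0.
have -> : (xk k * g = y * xk (g k))%g by rewrite mulgKV.
rewrite (rA.2 _ _ yA (xA _)) mulmxA (@vfix y) //.
by case: (stab0 yA y0) => ->; rewrite ?eqxx /= ?orbT.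
Qed.

Definition w j : int := if v 0 j == 1 then 1 else -1.

Lemma vw j : v 0 j = (w j)%:~R.
Proof.
rewrite /w; case: (v_pm j) => ->; first by rewrite eqxx.
by rewrite (negbTE (m1neq1 two)) intrN.
Qed.

Lemma w_pm j : w j = 1 \/ w j = -1.
Proof. by rewrite /w; case: ifP; [left|right]. Qed.

Lemma SE k j : Smx k j = (w j * sgp (pj j) (xk k))%:~R.
Proof.
rewrite mxE mxE (bigD1 j) //= big1 => [|i nij]; last first.
  by rewrite rho_diag ?xk_V4 // (negbTE nij) mulr0.
by rewrite addr0 rho_diag ?xk_V4 // eqxx eps ?xk_V4 // vw intrM.
Qed.

Lemma Spm k j : Smx k j = 1 \/ Smx k j = -1.
Proof.
rewrite SE; case: (w_pm j) => ->; case: (sgp_pm (pj j) (xk k)) => ->;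
  by [left | right].
Qed.

Lemma Scol j : \sum_k Smx k j = 0.
Proof.
under eq_bigr do rewrite SE.
by rewrite intr_sum -mulr_sumr (core (pjL j) (pjL j)).2 mulr0.
Qed.

Lemma Sorth j j' : \sum_k Smx k j * Smx k j' = (j == j')%:R * 4.
Proof.
under eq_bigr do rewrite !SE -intrM mulrACA.
rewrite intr_sum -mulr_sumr (core (pjL j) (pjL j')).1.
case: (eqVneq j j') => [<-|nj]; last by rewrite pj_neq // mulr0 mulr0n mul0r.
rewrite eqxx mul1r.
by case: (w_pm j) => ->.
Qed.

Lemma rho_equiv : equiv_to_Gamma2 A4 rho.
Proof. exact: (gamma two Spm Scol Sorth Seq). Qed.

End Spec.

Section Irr.
Variables (F : fieldType) (delta : {perm 'I_4} -> F) (t : 'I_3 -> {perm 'I_4})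
  (p : {perm 'I_4}).
Hypothesis two : (2 : F) != 0.
Hypothesis dl : lin_char_on V4 delta.
Hypothesis tT : is_rtransversal A4 V4 t.
Hypothesis pL : p \in [:: a1; a2; a3].
Hypothesis dp : {in V4, forall h, delta h = (sgp p h)%:~R}.

Local Notation rho := (ind_mx V4 delta t).

Lemma rho_irr (rho' : {perm 'I_4} -> 'M[F]_3) (Er : forall g, rho' g = rho g)
   (hr : mx_repr A4 rho') : mx_irreducible (MxRepresentation hr).
Proof.
apply/mx_irrP; split => // U modU nzU.
have modP x (W : 'M_(1,3)) : x \in A4 -> (W <= U)%MS -> (W *m rho x <= U)%MS.
  move=> xA WU; apply: submx_trans (submxMr _ WU) _.
  by move/mxmoduleP: modU => /(_ x xA) /=; rewrite Er.
case: (pickP (fun i => row i U != 0)) => [i0 ri0 | H]; last first.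
  case/eqP: nzU; apply/row_matrixP => i; rewrite row0.
  by move: (H i) => /negbFE/eqP.
set r := row i0 U; have rU : (r <= U)%MS := row_sub i0 U.
case: (pickP (fun j => r 0 j != 0)) => [j0 rj0 | H]; last first.
  case/eqP: ri0; apply/matrixP => i j; rewrite (ord1 i) [RHS]mxE.
  by move: (H j) => /negbFE/eqP.
have xA (k : 'I_4) : xk k \in A4 := V4_A4 (xk_V4 k).
pose E := \sum_(k < 4) (sgp (pj t p j0) (xk k))%:~R *: (r *m rho (xk k)).
have EU : (E <= U)%MS.
  by apply: summx_sub => k _; apply: scalemx_sub; apply: modP => //; apply: xA.
have rhoE k j : (r *m rho (xk k)) 0 j = r 0 j * (sgp (pj t p j) (xk k))%:~R.
  rewrite mxE (bigD1 j) //= big1 => [|i nij]; last first.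
    by rewrite (rho_diag delta tT) ?xk_V4 // (negbTE nij) mulr0.
  by rewrite addr0 (rho_diag delta tT) ?xk_V4 // eqxx (eps tT dp) ?xk_V4.
have Ecomp : E = (4 * r 0 j0) *: delta_mx 0 j0.
  apply/matrixP => i j; rewrite (ord1 i) summxE.
  under eq_bigr do rewrite mxE rhoE mulrCA -intrM.
  rewrite -mulr_sumr intr_sum (core (pjL tT pL j0) (pjL tT pL j)).1 !mxE eqxx /=.
  case: (eqVneq j0 j) => [<-|nj]; first by rewrite eqxx mulr1 mulrC.
  by rewrite (pj_neq tT pL nj) mulr0 mulr0.
have e0U : ((delta_mx 0 j0 : 'rV[F]_3) <= U)%MS.
  have -> : delta_mx 0 j0 = (4 * r 0 j0)^-1 *: E :> 'M[F]_(1,3).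
    by rewrite Ecomp scalerA mulVf ?scale1r // mulf_neq0 // four_neq0.
  exact: scalemx_sub.
rewrite -sub1mx; apply/row_subP => k; rewrite row1.
have yA : ((t j0)^-1 * t k)%g \in A4 by rewrite groupM ?groupV ?tT.1.
have -> : delta_mx 0 k = delta_mx 0 j0 *m rho ((t j0)^-1 * t k)%g :> 'M[F]_(1,3).
  rewrite -rowE; apply/matrixP => i j; rewrite (ord1 i) !mxE eqxx /= mulKVg.
  case: (eqVneq k j) => [<-|nkj]; first by rewrite mulgV group1 dl.1.
  case: ifP => // Hj.
  case: (tT.2 _ (tT.1 k)) => i' [_ U'].
  have Ek := U' k; have Ej := U' j.
  rewrite !mem_rcoset mulgV group1 in Ek Ej.
  by move: nkj; rewrite -(Ek isT) -(Ej Hj) eqxx.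
exact: modP.
Qed.

End Irr.


Lemma two_neq0 (R : comNzRingType) : is_2adic_integers R -> (2 : R) != 0.
Proof.
case=> pi [p1 pD _ _ _]; apply/eqP => E.
have p0 : pi 1%N 0 = 0.
  have h := pD 1%N 0 0; rewrite addr0 in h.
  have : pi 1%N 0 - pi 1%N 0 = pi 1%N 0 + pi 1%N 0 - pi 1%N 0 by rewrite -h.
  by rewrite subrr addrK => <-.
have := pD 1%N 1 1; rewrite -[1 + 1]/(2 : R) E p0 p1 => /esym/eqP.
by [].
Qed.

Definition b3b3 : {perm 'I_4} := (b3 * b3)%g.
Definition t0 (i : 'I_3) : {perm 'I_4} :=
  match val i with 0%N => 1%g | 1%N => b3b3 | _ => b3 end.

Definition q0 : 'I_3 := @Ordinal 3 0 isT.
Definition q1 : 'I_3 := @Ordinal 3 1 isT.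
Definition q2 : 'I_3 := @Ordinal 3 2 isT.

Lemma ord3E (x : 'I_3) : [\/ x = q0, x = q1 | x = q2].
Proof.
case: x => -[|[|[|i]]] Hi //.
- by constructor 1; apply/val_inj.
- by constructor 2; apply/val_inj.
- by constructor 3; apply/val_inj.
Qed.

Lemma b3V : (b3^-1 = b3 * b3)%g.
Proof. by apply/eqP; rewrite eq_invg_mul; pdec. Qed.
Lemma b3b3V : (b3b3^-1 = b3)%g.
Proof. by apply/eqP; rewrite eq_invg_mul /b3b3; pdec. Qed.

Lemma t0_A4 i : t0 i \in A4.
Proof. by case: (ord3E i) => ->; rewrite /t0 /= ?group1 ?b3_A4 // /b3b3 groupM ?b3_A4. Qed.

Lemma t0_trans : is_rtransversal A4 V4 t0.
Proof.
split; first exact: t0_A4.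
move=> x xA.
have U i j : (x * (t0 i)^-1 \in V4)%g -> (x * (t0 j)^-1 \in V4)%g -> i = j.
  move=> Hi Hj.
  have : (t0 i * (t0 j)^-1 \in V4)%g.
    have -> : (t0 i * (t0 j)^-1 = (x * (t0 i)^-1)^-1 * (x * (t0 j)^-1))%g.
      by rewrite invMg invgK !mulgA mulgKV.
    by rewrite groupM ?groupV.
  case: (ord3E i) => ->; case: (ord3E j) => -> //; rewrite /t0 /= ?invg1 ?b3b3V ?b3V /b3b3;
    by rewrite inV4; pdec.
have [i Hi] : exists i, (x * (t0 i)^-1 \in V4)%g.
  case: (A4dec xA) => h hV [->|->|->]; [exists q0 | exists q2 | exists q1];
    move: hV; rewrite /t0 /= ?invg1 ?b3b3V ?b3V /b3b3 inV4 => /or4P[] /eqP->;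
    by rewrite inV4; pdec.
exists i; split; first by rewrite mem_rcoset.
by move=> j; rewrite mem_rcoset => Hj; apply: U.
Qed.

Definition d0 (R : nzRingType) (g : {perm 'I_4}) : R := (sgp a2 g)%:~R.

Lemma d0_lin (R : idomainType) : lin_char_on V4 (@d0 R).
Proof.
split; first by rewrite /d0 /sgp eqxx.
move=> h k; rewrite !inV4 => /or4P[] /eqP-> /or4P[] /eqP->; rewrite /d0 -intrM;
  congr (_%:~R); rewrite /sgp; pdec; reflexivity.
Qed.

Lemma sgp_code p h : sgp p h = if (code h == code 1%g) || (code h == code p) then 1 else -1.
Proof. by rewrite /sgp !eq_code. Qed.

Lemma inV4c x : (x \in V4) = (code x \in [:: code 1%g; code a1; code a2; code a3]).
Proof. by rewrite inV4 !eq_code !inE. Qed.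

Lemma a1V4 : a1 \in V4.
Proof. by rewrite inV4 eqxx orbT. Qed.

Lemma mu_a1 (R : idomainType) : ind_mx V4 (@d0 R) t0 a1 = diag_a1 R.
Proof.
apply/matrixP => i j; rewrite (rho_diag (@d0 R) t0_trans) ?a1V4 // mxE.
case: (eqVneq i j) => [_|nij] //.
rewrite /d0 conjgE invgK; case: (ord3E i) => ->;
  rewrite /t0 /= ?invg1 ?b3b3V ?b3V /b3b3 sgp_code; cbase; repeat (rewrite codeM; cbase);
  by rewrite /= ?intrN.
Qed.

Lemma mu_b3 (R : idomainType) : ind_mx V4 (@d0 R) t0 b3 = cyc_b R.
Proof.
apply/matrixP => i j; rewrite !mxE.
case: (ord3E i) => ->; case: (ord3E j) => ->;
  rewrite /t0 /= ?invg1 ?b3b3V ?b3V /b3b3 inV4c /d0 ?sgp_code; cbase; repeat (rewrite codeM; cbase);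
  by rewrite /= ?inE /=.
Qed.

Theorem mainTheorem6 (R : idomainType) (hR : is_2adic_integers R) :
  (forall delta : {perm 'I_4} -> R,
     lin_char_on V4 delta ->
     [\/ delta a1 = -1 /\ delta a2 = 1,
         delta a1 = 1 /\ delta a2 = -1 |
         delta a1 = -1 /\ delta a2 = -1] ->
     forall t : 'I_3 -> {perm 'I_4}, is_rtransversal A4 V4 t ->
       irreducible_over_frac A4 (ind_mx V4 delta t) /\
       equiv_to_Gamma2 A4 (ind_mx V4 delta t))
  /\
  (exists mu : {perm 'I_4} -> 'M[R]_3,
     [/\ is_mx_repr A4 mu, mu a1 = diag_a1 R, mu b3 = cyc_b R &
         equiv_to_Gamma2 A4 mu]).
Proof.
have two := two_neq0 hR.
split.
  move=> delta dl dc t tT.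
  case: (dform dl dc) => p pL dp.
  split; last exact: (rho_equiv two dl tT pL dp).
  pose dF := fun x => tofrac (delta x) : {fraction R}.
  have EF g : map_mx (@tofrac R) (ind_mx V4 delta t g) = ind_mx V4 dF t g.
    exact: ind_map.
  have twoF : (2 : {fraction R}) != 0.
    by rewrite -(rmorph_nat (@tofrac R)) tofrac_eq0.
  have dlF : lin_char_on V4 dF.
    split; first by rewrite /dF dl.1 rmorph1.
    by move=> x y xV yV; rewrite /dF dl.2 // rmorphM.
  have dpF : {in V4, forall h, dF h = (sgp p h)%:~R}.
    by move=> h hV; rewrite /dF dp // rmorph_int.
  have hr : mx_repr A4 (fun g => map_mx (@tofrac R) (ind_mx V4 delta t g)).
    split; first by rewrite EF (ind_repr dlF tT).1.
    by move=> x y xA yA; rewrite !EF (ind_repr dlF tT).2.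
  by exists hr; apply: (rho_irr twoF dlF tT pL dpF).
exists (ind_mx V4 (@d0 R) t0); split.
- exact: ind_repr (d0_lin R) t0_trans.
- exact: mu_a1.
- exact: mu_b3.
- apply: (rho_equiv (p := a2) two (d0_lin R) t0_trans); first by rewrite !inE eqxx orbT.
  by [].
Qed.
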